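(* Let $i\in\{0,\dots,t-1\}$ and let $i(0),\dots,i(\lg t-1)\in\{0,1\}$ be such that $i=\sum_{k}i(k)\cdot 2^k$. Let $\mathcal Y_i=\{y^{i(k),i(\ell)}_{k,\ell} : 0\le k\le\ell\le\lg t-1\}$, where $y^{i(k),i(\ell)}_{k,\ell}$ is taken to be the empty item (weight and profit $0$) if $i(k)=i(\ell)=0$. Then $p(\mathcal Y_i)=w(\mathcal Y_i)+\left(\binom{i+1}{2}-\frac{i}{3}\right)\cdot 9nB$.
   Context: $n\ge1$ and $B$ are positive integers (in the paper $B=B_n+nX$ with $B_n=\sum_{j=1}^{3n}(3n+1)^j$, $X=3tnB_n$). Let $t$ be a power of two, $\lg$ the base-2 logarithm, $Y=3t^2nB$, and fix a bijection $f:\{0,\dots,\lg t-1\}^2\to\{0,\dots,(\lg t)^2-1\}$. Quadratization items: for each $0\le k<\ell\le\lg t-1$, items $y^{1,0}_{k,\ell}$ with $w=p=3^{f(k,\ell)}Y$; $y^{0,1}_{k,\ell}$ with $w=p=3^{f(\ell,k)}Y$; and $y^{1,1}_{k,\ell}$ with $w=(3^{f(k,\ell)}+3^{f(\ell,k)})Y$ and $p=(3^{f(k,\ell)}+3^{f(\ell,k)})Y+2^{k+\ell}\cdot 9nB$; and for each $0\le k\le\lg t-1$ an item $y^{1,1}_{k,k}$ with $w=3^{f(k,k)}Y$ and $p=3^{f(k,k)}Y+2^{2k}\cdot 4.5nB+2^k\cdot 1.5nB$. For a set $\mathcal S$ of items, $w(\mathcal S)=\sum_{x\in\mathcal S}w(x)$,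 $p(\mathcal S)=\sum_{x\in\mathcal S}p(x)$. *)

(* Defs.v *)
From mathcomp Require Import all_boot all_order all_algebra.
Set Implicit Arguments. Unset Strict Implicit. Unset Printing Implicit Defensive.
Import Order.TTheory GRing.Theory Num.Theory.
Local Open Scope ring_scope.

(* lg t = L, i.e. t = 2^L.  Pairs (k,l) of 'I_L are bit positions. *)

(* Quadratization items.  [Ydiag k] is y^{1,1}_{k,k}; [Y11 k l] is
   y^{1,1}_{k,l} for k < l; [Yempty] is the empty item. *)
Inductive qitem (L : nat) : Type :=
| Y10 of 'I_L & 'I_L
| Y01 of 'I_L & 'I_L
| Y11 of 'I_L & 'I_L
| Ydiag of 'I_L
| Yempty.

Definition bigY (n B L : nat) : rat := (3 * (2 ^ L) ^ 2 * n * B)%N%:R.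

Section Items.
Variables (n B L : nat) (f : 'I_L * 'I_L -> 'I_(L * L)).

Definition e3 (k l : 'I_L) : rat := (3 ^ (f (k, l)))%N%:R.

Definition qweight (x : qitem L) : rat :=
  match x with
  | Y10 k l => e3 k l * bigY n B L
  | Y01 k l => e3 l k * bigY n B L
  | Y11 k l => (e3 k l + e3 l k) * bigY n B L
  | Ydiag k => e3 k k * bigY n B L
  | Yempty => 0
  end.

Definition qprofit (x : qitem L) : rat :=
  match x with
  | Y10 k l => e3 k l * bigY n B L
  | Y01 k l => e3 l k * bigY n B L
  | Y11 k l => (e3 k l + e3 l k) * bigY n B L
                 + (2 ^ (k + l))%N%:R * 9 * n%:R * B%:R
  | Ydiag k => e3 k k * bigY n B L
                 + (2 ^ (2 * k))%N%:R * (9 / 2) * n%:R * B%:R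
                 + (2 ^ k)%N%:R * (3 / 2) * n%:R * B%:R
  | Yempty => 0
  end.
End Items.

Definition sel_item (L : nat) (b : 'I_L -> bool) (k l : 'I_L) : qitem L :=
  if k == l then (if b k then Ydiag k else Yempty L)
  else match b k, b l with
       | true, false => Y10 k l
       | false, true => Y01 k l
       | true, true => Y11 k l
       | false, false => Yempty L
       end.

Definition wY (n B L : nat) (f : 'I_L * 'I_L -> 'I_(L * L)) (b : 'I_L -> bool) : rat :=
  \sum_(k < L) \sum_(l < L | (k <= l)%N) qweight n B f (sel_item b k l).
Definition pY (n B L : nat) (f : 'I_L * 'I_L -> 'I_(L * L)) (b : 'I_L -> bool) : rat :=
  \sum_(k < L) \sum_(l < L | (k <= l)%N) qprofit n B f (sel_item b k l).

(* Main.v *)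
Require Import Defs.
From mathcomp Require Import all_boot all_order all_algebra.
From mathcomp Require Import ring zify.
Import Order.TTheory GRing.Theory Num.Theory.
Local Open Scope ring_scope.

Lemma sym_sum L (g : 'I_L -> 'I_L -> rat) : (forall k l, g k l = g l k) ->
  \sum_k \sum_l g k l = \sum_(k : 'I_L) \sum_(l : 'I_L | (k <= l)%N) (if k == l then g k k else 2 * g k l).
Proof.
move=> gs.
have E : forall k, \sum_l g k l = \sum_(l : 'I_L | (k <= l)%N) g k l + \sum_(l : 'I_L) (if (l < k)%N then g k l else 0).
  move=> k; rewrite (bigID (fun l : 'I_L => (k <= l)%N)) /=; congr (_ + _).
  by rewrite big_mkcond; apply: eq_bigr => l _; rewrite -ltnNge.
under eq_bigr do rewrite E.
rewrite big_split /= exchange_big /=.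
rewrite -big_split /=; apply: eq_bigr => k _.
rewrite [X in _ + X](eq_bigr (fun l : 'I_L => if (k < l)%N then g k l else 0)); last first.
  by move=> l _; rewrite gs.
rewrite big_mkcond [in RHS]big_mkcond -big_split /=.
apply: eq_bigr => l _.
case: eqP => [->|ne]; first by rewrite leqnn ltnn addr0.
have : (k:nat) <> l by move=> h; apply: ne; apply: val_inj.
case: ltngtP => // _ _; rewrite ?mulr2n; ring.
Qed.
Lemma binC2 i : ('C(i.+1, 2) * 2 = i.+1 * i)%N.
Proof. elim: i => [//|i IH]; rewrite binS bin1 mulnDl IH; lia. Qed.

Theorem lemma4 (n B L : nat) (f : 'I_L * 'I_L -> 'I_(L * L)) :
  (1 <= n)%N -> (0 < B)%N -> bijective f ->
  forall (i : nat) (b : 'I_L -> bool),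
    (i < 2 ^ L)%N ->
    i = (\sum_(k < L) b k * 2 ^ k)%N ->
    pY n B f b = wY n B f b + ('C(i.+1, 2)%:R - i%:R / 3) * 9 * n%:R * B%:R.
Proof.
move=> _ _ _ i b _ Hi.
pose x (k : 'I_L) : rat := (b k)%:R * 2%:R ^+ k.
have Ei : i%:R = \sum_k x k.
  by rewrite Hi natr_sum; apply: eq_bigr => k _; rewrite natrM natrX.
have Ec : 'C(i.+1, 2)%:R = (i%:R + 1) * i%:R / 2 :> rat.
  move: (binC2 i) => /(congr1 (fun m => m%:R : rat)) /=.
  rewrite !natrM -addn1 natrD => H.
  have h2 : (2:rat) != 0 by [].
  by rewrite -[LHS](mulfK h2) H; field.
apply/eqP; rewrite addrC -subr_eq; apply/eqP; rewrite /pY /wY -sumrB.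
have ED : forall k l : 'I_L, qprofit n B f (sel_item b k l) - qweight n B f (sel_item b k l)
   = 9 * n%:R * B%:R * ((if k == l then x k * x k else 2 * (x k * x l)) / 2
                         + (if k == l then x k / 6 else 0)).
  move=> k l; rewrite /sel_item /x; case: (eqVneq k l) => [e|ne].
    case: (b k) => /=; rewrite ?mul0r ?mul1r; last by rewrite subrr; ring.
    by rewrite natrX natrX mulnC exprM; field.
  case: (b k); case: (b l) => /=; rewrite ?mul0r ?mul1r ?subrr; try ring.
  by rewrite natrX exprD; field.
under eq_bigr do rewrite -sumrB; under eq_bigr do under eq_bigr do rewrite ED.
have S2 : forall k : 'I_L, \sum_(l < L | (k <= l)%N) (if k == l then x k / 6 else 0) = x k / 6.
  move=> k; rewrite big_mkcond (bigD1 k) //= leqnn eqxx big1 ?addr0 // => l.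
  by rewrite eq_sym => /negbTE ->; case: ifP.
have Sq : \sum_k \sum_l x k * x l = (\sum_k x k) * (\sum_k x k).
  by rewrite mulr_suml; apply: eq_bigr => k _; rewrite mulr_sumr.
under eq_bigr do rewrite -mulr_sumr big_split /= S2 -mulr_suml.
rewrite -mulr_sumr big_split /= -mulr_suml.
rewrite -(@sym_sum L (fun k l => x k * x l)); last by move=> *; apply: mulrC.
by rewrite Sq -mulr_suml -Ei Ec; field.
Qed.
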